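(* Let $Y$ be the set of functions $F(\gamma)=f(\gamma(s_1),\dots,\gamma(s_k))$, $\gamma\in C_0([0,1];\mathbb R^d)$, where $k\in\mathbb N$, $0<s_1<\dots<s_k=1$ with $s_1,\dots,s_k\in\{l/2^n:l\in\{1,\dots,2^n\}\}$ for some $n\in\mathbb N$, and $f\in C^\infty_p((\mathbb R^d)^k)$; and let $\tilde Y$ be the set of functions $F(\gamma)=f(\langle S_1,\gamma\rangle,\dots,\langle S_k,\gamma\rangle)$ with $k\in\mathbb N$, $f\in C^\infty_p(\mathbb R^k)$. Then $Y=\tilde Y$.
   Context: Fix $d\in\mathbb N$, $(e_j)$ standard basis of $\mathbb R^d$. $C_0([0,1];\mathbb R^d)$ is the space of continuous $\gamma:[0,1]\to\mathbb R^d$ with $\gamma(0)=0$. $C^\infty_p(\mathbb R^N)$ denotes the infinitely differentiable real functions all of whose partial derivatives are of at most polynomial growth. Haar functions: $H_1\equiv1$, and for $m\ge0$, $k=1,\dots,2^m$: $H_{2^m+k}=2^{m/2}$ on $[\frac{2k-2}{2^{m+1}},\frac{2k-1}{2^{m+1}})$, $-2^{m/2}$ on $[\frac{2k-1}{2^{m+1}},\frac{2k}{2^{m+1}})$, $0$ otherwise. $g_{d(r-1)+j}:=H_re_j$ ($r\in\mathbb N$, $1\le j\le d$), $S_i(s):=\int_0^sg_i(u)du$, and $\langle S_i,\gamma\rangle:=\int_0^1g_i(u)\cdot d\gamma_u$ (Stieltjes integral of the step function $g_i$). *)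

(* Defs.v *)
From HB Require Import structures.
From mathcomp Require Import all_boot all_order all_algebra.
From mathcomp Require Import all_classical all_reals all_analysis.
Set Implicit Arguments. Unset Strict Implicit. Unset Printing Implicit Defensive.
Import Order.TTheory GRing.Theory Num.Theory.
Import numFieldNormedType.Exports.
Local Open Scope ring_scope.
Local Open Scope classical_set_scope.

Section Defs.
Variable R : realType.

(* iterated partial derivatives of f : 'M[R]_(m,n) -> R; the list l gives the
   coordinate directions (i,j) (last element of l is differentiated first) *)
Fixpoint iter_partial (m n : nat) (l : seq ('I_m * 'I_n))
    (f : 'M[R]_(m, n) -> R) : 'M[R]_(m, n) -> R :=
  match l with
  | [::] => f
  | p :: l' => fun x => derive (iter_partial l' f) x (delta_mx p.1 p.2)
  end.

Definition Cinf_p (m n : nat) (f : 'M[R]_(m, n) -> R) : Prop :=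
  forall l : seq ('I_m * 'I_n),
    continuous (iter_partial l f) /\
    (forall (p : 'I_m * 'I_n) (x : 'M[R]_(m, n)),
        derivable (iter_partial l f) x (delta_mx p.1 p.2)) /\
    (exists (C : R) (N : nat), forall x : 'M[R]_(m, n),
        `|iter_partial l f x| <= C * (1 + `|x| ^+ N)).

Definition C0path (d : nat) (gamma : R -> 'rV[R]_d) : Prop :=
  {within `[0, 1]%classic, continuous gamma} /\ gamma 0 = 0.

(* Haar function H_{2^m+k} (m >= 0, 1 <= k <= 2^m) *)
Definition haar (m k : nat) (u : R) : R :=
  let a := (2 * k - 2)%:R / (2 ^ m.+1)%:R in
  let b := (2 * k - 1)%:R / (2 ^ m.+1)%:R in
  let c := (2 * k)%:R / (2 ^ m.+1)%:R in
  if (a <= u) && (u < b) then Num.sqrt ((2 ^ m)%:R)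
  else if (b <= u) && (u < c) then - Num.sqrt ((2 ^ m)%:R)
  else 0.

(* H_r for r >= 1: H_1 = 1, and r = 2^m + k with 1 <= k <= 2^m *)
Definition H (r : nat) (u : R) : R :=
  if r == 1%N then 1
  else haar (trunc_log 2 r.-1) (r - 2 ^ trunc_log 2 r.-1) u.

(* g_{d(r-1)+j} = H_r e_j  (i >= 1, r = (i-1)/d + 1, j = (i-1) mod d + 1;
   coordinates are 0-indexed in the row vector) *)
Definition gfun (d i : nat) (u : R) : 'rV[R]_d :=
  \row_(j < d) (if (j : nat) == (i.-1 %% d)%N then H ((i.-1 %/ d).+1) u else 0).

Definition RS_sum (d : nat) (g : R -> 'rV[R]_d) (gamma : R -> 'rV[R]_d)
    (n : nat) : R :=
  \sum_(l < 2 ^ n) \sum_(j < d)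
     g (l%:R / (2 ^ n)%:R) 0 j *
     (gamma (l.+1%:R / (2 ^ n)%:R) 0 j - gamma (l%:R / (2 ^ n)%:R) 0 j).

(* <S_i, gamma> = int_0^1 g_i(u) . d gamma_u  (Stieltjes integral) *)
Definition pairS (d i : nat) (gamma : R -> 'rV[R]_d) : R :=
  limn (RS_sum (gfun d i) gamma).

Definition inY (d : nat) (F : (R -> 'rV[R]_d) -> R) : Prop :=
  exists (k n : nat) (l : nat -> nat) (f : 'M[R]_(k, d) -> R),
    (0 < k)%N /\ (0 < n)%N /\
    (forall i, (i < k)%N -> (1 <= l i)%N /\ (l i <= 2 ^ n)%N) /\
    (forall i, (i.+1 < k)%N -> (l i < l i.+1)%N) /\
    l k.-1 = (2 ^ n)%N /\
    Cinf_p f /\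
    (forall gamma, C0path gamma ->
       F gamma = f (\matrix_(i < k, j < d)
                      gamma ((l i)%:R / (2 ^ n)%:R) 0 j)).

Definition inYt (d : nat) (F : (R -> 'rV[R]_d) -> R) : Prop :=
  exists (k : nat) (f : 'rV[R]_k -> R),
    [/\ (0 < k)%N, Cinf_p f &
        forall gamma, C0path gamma ->
          F gamma = f (\row_(i < k) @pairS d i.+1 gamma)].

End Defs.
Arguments pairS {R} d i gamma.

(* Main.v *)
Require Import Defs.
From HB Require Import structures.
From mathcomp Require Import all_boot all_order all_algebra.
From mathcomp Require Import all_classical all_reals all_analysis.
From mathcomp Require Import zify ring lra.

Module Helpers.
Set Implicit Arguments. Unset Strict Implicit. Unset Printing Implicit Defensive.
Import Order.TTheory GRing.Theory Num.Theory.
Import numFieldNormedType.Exports.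
Local Open Scope ring_scope.
Local Open Scope classical_set_scope.
Section PartA.
Variable R : realType.

Lemma dir_ext (U V : normedModType R) (f : U -> R) (g : V -> R) (a : U) (b : V)
  (v : U) (u : V) :
  (forall t : R, f (t *: v + a) = g (t *: u + b)) ->
  derivable f a v = derivable g b u /\ derive f a v = derive g b u.
Proof.
move=> E.
have E' : (fun h : R => h^-1 *: ((f \o shift a) (h *: v) - f a)) =
          (fun h : R => h^-1 *: ((g \o shift b) (h *: u) - g b)).
  apply/funext => h /=.
  have -> : f a = g b by have := E 0; rewrite !scale0r !add0r.
  by rewrite E.
by rewrite /derivable /derive E'.
Qed.

Lemma mvt_any (phi : R -> R) (a b : R) : (forall s, derivable phi s 1) ->
  exists xi, `|xi - a| <= `|b - a| /\ phi b - phi a = derive phi xi 1 * (b - a).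
Proof.
move=> dphi.
have cphi : forall c d : R, {within `[c, d], continuous phi}.
  move=> c d; apply: derivable_within_continuous => s _; exact: dphi.
have idr : forall s : R, is_derive s (1:R) phi (derive phi s 1) by move=> s; exact: derivableP.
have [ab|ba] := leP a b.
  have [xi xiab E] := MVT_segment ab (fun s _ => idr s) (cphi a b).
  exists xi; split => //.
  move: xiab; rewrite in_itv /= => /andP[h1 h2].
  have h3 : 0 <= xi - a by lra.
  have h4 : 0 <= b - a by lra.
  rewrite (ger0_norm h3) (ger0_norm h4); lra.
have [xi xiab E] := MVT_segment (ltW ba) (fun s _ => idr s) (cphi b a).
exists xi; split.
  move: xiab; rewrite in_itv /= => /andP[h1 h2].
  have h3 : xi - a <= 0 by lra.
  have h4 : b - a <= 0 by lra.
  rewrite (ler0_norm h3) (ler0_norm h4); lra.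
have -> : phi b - phi a = -(phi a - phi b) by rewrite opprB.
by rewrite E -mulrN opprB.
Qed.

Lemma key1 (m n : nat) (h : 'M[R]_(m,n) -> R) (e w x : 'M[R]_(m,n)) (c : R) :
  (forall y, derivable h y e) -> {for x, continuous (fun y => derive h y e)} ->
  (fun t : R => t^-1 * (h (t *: (c *: e) + (t *: w + x)) - h (t *: w + x))) @ 0^'
    --> c * derive h x e.
Proof.
move=> dh ch.
apply/cvgrPdist_le => eps eps0.
have eps1 : 0 < eps / (`|c| + 1) by apply: divr_gt0 => //; rewrite ltr_pwDr.
move/cvgrPdist_le : ch => /(_ _ eps1) /nbhs_ballP [r /= r0 Hr].
have K0 : 0 < `|c| * `|e| + `|w| + 1 by rewrite ltr_pwDr // addr_ge0 // mulr_ge0.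
near=> t.
have tn0 : t != 0 by near: t; exact: nbhs_dnbhs_neq.
have tsm : `|t| < r / (`|c| * `|e| + `|w| + 1).
  by near: t; apply: dnbhs0_lt; exact: divr_gt0.
set z := t *: w + x.
pose phi := fun s : R => h (s *: e + z).
have dphi s : derivable phi s 1 /\ derive phi s 1 = derive h (s *: e + z) e.
  have [E1 E2] : derivable phi s 1 = derivable h (s *: e + z) e /\
      derive phi s 1 = derive h (s *: e + z) e.
    apply: dir_ext => tau; rewrite /phi scalerDl.
    rewrite -addrA; congr (h (_ + _)).
    by congr (_ *: _); exact: mulr1.
  by split; [rewrite E1; exact: dh | exact: E2].
have [xi [xib E]] := mvt_any 0 (t * c) (fun s => (dphi s).1).
rewrite subr0 in xib E.
rewrite (dphi xi).2 /phi scale0r add0r in E.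
rewrite scalerA E subr0.
have -> : t^-1 * (derive h (xi *: e + z) e * (t * c)) = c * derive h (xi *: e + z) e.
  by field.
rewrite -mulrBr normrM.
have H1 : `|derive h x e - derive h (xi *: e + z) e| <= eps / (`|c| + 1).
  apply: Hr; rewrite -ball_normE /= /z.
  have -> : x - (xi *: e + (t *: w + x)) = - (xi *: e + t *: w).
    by rewrite addrA opprD addrCA subrr addr0.
  rewrite normrN; apply: (le_lt_trans (ler_normD _ _)).
  rewrite !normrZ.
  have hxi : `|xi| <= `|t| * `|c| by rewrite -normrM; move: xib; rewrite ?subr0.
  apply: (@le_lt_trans _ _ (`|t| * (`|c| * `|e| + `|w| + 1))).
    have he : 0 <= `|e| by [].
    have hw : 0 <= `|w| by [].
    have ht : 0 <= `|t| by [].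
    nra.
  by rewrite -ltr_pdivlMr.
apply: (le_trans (ler_wpM2l (normr_ge0 c) H1)).
rewrite mulrA ler_pdivrMr ?ltr_pwDr //.
nra.
Unshelve. all: by end_near.
Qed.


Lemma CPs (m n : nat) (h : 'M[R]_(m,n) -> R) :
  (forall (p : 'I_m * 'I_n) y, derivable h y (delta_mx p.1 p.2)) ->
  (forall p : 'I_m * 'I_n, continuous (fun y => derive h y (delta_mx p.1 p.2))) ->
  forall s : seq ('I_m * 'I_n), uniq s -> forall x v : 'M[R]_(m,n),
  (forall p, p \notin s -> v p.1 p.2 = 0) ->
  (fun t : R => t^-1 * (h (t *: v + x) - h x)) @ 0^' -->
    \sum_(p <- s) v p.1 p.2 * derive h x (delta_mx p.1 p.2).
Proof.
move=> dh ch; elim=> [|p s IH] /=.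
  move=> _ x v v0.
  have -> : v = 0 by apply/matrixP => i j; rewrite mxE (v0 (i,j)).
  rewrite big_nil.
  have -> : (fun t : R => t^-1 * (h (t *: (0 : 'M[R]_(m,n)) + x) - h x)) = fun _ => 0.
    by apply/funext => t; rewrite scaler0 add0r subrr mulr0.
  exact: cvg_cst.
move=> /andP[ps us] x v vs.
set w := v - v p.1 p.2 *: delta_mx p.1 p.2.
have wE : forall q, q != p -> w q.1 q.2 = v q.1 q.2.
  move=> [q1 q2] qp; rewrite /w !mxE.
  case: p {ps vs w} qp => p1 p2 qp /=.
  suff -> : (q1 == p1) && (q2 == p2) = false by rewrite mulr0 subr0.
  by apply/negbTE; rewrite -xpair_eqE.
have ws : forall q, q \notin s -> w q.1 q.2 = 0.
  move=> q qs; have [->|qp] := eqVneq q p.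
    by rewrite /w !mxE !eqxx mulr1 subrr.
  by rewrite wE // vs // inE negb_or qp.
have -> : (fun t : R => t^-1 * (h (t *: v + x) - h x)) =
  (fun t => t^-1 * (h (t *: (v p.1 p.2 *: delta_mx p.1 p.2) + (t *: w + x))
      - h (t *: w + x))
  + t^-1 * (h (t *: w + x) - h x)).
  apply/funext => t /=; rewrite -mulrDr; congr (_ * _).
  have -> : t *: (v p.1 p.2 *: delta_mx p.1 p.2) + (t *: w + x) = t *: v + x.
    by rewrite addrA -scalerDr [_ + w]addrC /w subrK.
  by rewrite addrA subrK.
rewrite big_cons.
have -> : \sum_(q <- s) v q.1 q.2 * derive h x (delta_mx q.1 q.2) =
          \sum_(q <- s) w q.1 q.2 * derive h x (delta_mx q.1 q.2).
  apply: eq_big_seq => q qs; rewrite wE //.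
  by apply: contraNneq ps => <-.
apply: cvgD; first exact: key1 (dh _) (ch _ x).
exact: IH.
Qed.

Lemma CP (m n : nat) (h : 'M[R]_(m,n) -> R) :
  (forall (p : 'I_m * 'I_n) y, derivable h y (delta_mx p.1 p.2)) ->
  (forall p : 'I_m * 'I_n, continuous (fun y => derive h y (delta_mx p.1 p.2))) ->
  forall x v : 'M[R]_(m,n), derivable h x v /\
    derive h x v = \sum_(p : 'I_m * 'I_n) v p.1 p.2 * derive h x (delta_mx p.1 p.2).
Proof.
move=> dh ch x v.
have H := CPs dh ch (index_enum_uniq _) (x:=x) (v:=v) (fun p pn => False_ind _ (negP pn (mem_index_enum p))).
split; first exact: cvgP H.
exact: cvg_lim H.
Qed.

Lemma entry_le (p q : nat) (x : 'M[R]_(p,q)) i j : `|x i j| <= `|x|.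
Proof.
by rewrite [leRHS]/Num.norm /= mx_normrE; apply/bigmax_geP; right => /=; exists (i, j).
Qed.

Definition PB (p q : nat) (g : 'M[R]_(p,q) -> R) :=
  exists (C : R) (N : nat), forall x, `|g x| <= C * (1 + `|x| ^+ N).

Lemma pw (a : R) (i N : nat) : 0 <= a -> (i <= N)%N -> a ^+ i <= 1 + a ^+ N.
Proof.
move=> a0 iN; have [a1|a1] := leP a 1.
  apply: (le_trans (exprn_ile1 i a0 a1)); rewrite lerDl; exact: exprn_ge0.
apply: (le_trans _ (ler_wpDl ler01 (lexx _))).
by rewrite ler_eXn2l.
Qed.

Lemma PB_add (p q : nat) (g1 g2 : 'M[R]_(p,q) -> R) : PB g1 -> PB g2 ->
  PB (fun x => g1 x + g2 x).
Proof.
move=> [C1 [N1 H1]] [C2 [N2 H2]].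
exists (2 * (`|C1| + `|C2|)), (maxn N1 N2) => x.
have a0 : 0 <= `|x| by [].
have e1 := pw a0 (leq_maxl N1 N2).
have e2 := pw a0 (leq_maxr N1 N2).
have b1 : `|g1 x| <= `|C1| * (1 + `|x| ^+ N1).
  apply: (le_trans (H1 x)); apply: ler_wpM2r; first by rewrite addr_ge0 // exprn_ge0.
  exact: ler_norm.
have b2 : `|g2 x| <= `|C2| * (1 + `|x| ^+ N2).
  apply: (le_trans (H2 x)); apply: ler_wpM2r; first by rewrite addr_ge0 // exprn_ge0.
  exact: ler_norm.
apply: (le_trans (ler_normD _ _)).
have c1 : 0 <= `|C1| by [].
have c2 : 0 <= `|C2| by [].
set A := `|x| ^+ maxn N1 N2 in e1 e2 *.
set A1 := `|x| ^+ N1 in e1 b1.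
set A2 := `|x| ^+ N2 in e2 b2.
have A0 : 0 <= A by rewrite /A exprn_ge0.
nra.
Qed.

Lemma PB_scale (p q : nat) (c : R) (g : 'M[R]_(p,q) -> R) : PB g ->
  PB (fun x => c * g x).
Proof.
move=> [C [N H]]; exists (`|c| * C), N => x.
rewrite normrM -mulrA; apply: ler_wpM2l => //; exact: H.
Qed.

Lemma PB_0 (p q : nat) : PB (fun _ : 'M[R]_(p,q) => 0).
Proof. by exists 0, 0%N => x; rewrite normr0 mul0r. Qed.

Section Comp.
Variables (m n m' n' : nat) (f : 'M[R]_(m,n) -> R)
  (L : 'M[R]_(m',n') -> 'M[R]_(m,n)).
Hypothesis HL : forall a x y, L (a *: x + y) = a *: L x + L y.
Hypothesis Hf : Cinf_p f.

Lemma L0 : L 0 = 0.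
Proof.
have := HL 1 0 0; rewrite scaler0 addr0 scale1r => /(congr1 (fun z => z - L 0)).
by rewrite addrK subrr => ->.
Qed.

Lemma LD x y : L (x + y) = L x + L y.
Proof. by have := HL 1 x y; rewrite !scale1r. Qed.

Lemma LZ a x : L (a *: x) = a *: L x.
Proof. by rewrite -[a *: x]addr0 HL L0 addr0. Qed.

Lemma LB x y : L (x - y) = L x - L y.
Proof. by rewrite addrC -scaleN1r HL scaleN1r addrC. Qed.

Lemma Lsum (I : Type) (r : seq I) (P : pred I) (F : I -> 'M[R]_(m',n')) :
  L (\sum_(i <- r | P i) F i) = \sum_(i <- r | P i) L (F i).
Proof.
apply: (big_ind2 (fun a b => L a = b)); first exact: L0.
  by move=> a b c d <- <-; rewrite LD.
by [].
Qed.

Lemma Lbound : exists K, 0 <= K /\ forall x, `|L x| <= K * `|x|.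
Proof.
exists (\sum_(q : 'I_m' * 'I_n') `|L (delta_mx q.1 q.2)|); split.
  by apply: sumr_ge0 => q _.
move=> x.
rewrite {1}(matrix_sum_delta x) pair_big /= Lsum mulr_suml.
apply: (le_trans (ler_norm_sum _ _ _)); apply: ler_sum => q _.
rewrite LZ normrZ mulrC; apply: ler_wpM2l => //; exact: entry_le.
Qed.

Lemma Lcont : continuous L.
Proof.
have [K [K0 HK]] := Lbound.
move=> x; apply/(@cvgrPdist_le _ _ _ (nbhs x) (nbhs_filter x)) => e e0.
have e1 : 0 < e / (K + 1) by apply: divr_gt0 => //; rewrite ltr_pwDr.
have h2 : K * (e / (K + 1)) <= e.
  rewrite mulrA ler_pdivrMr ?ltr_pwDr //; nra.
near=> y.
rewrite -LB; apply: (le_trans (HK _)).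
apply: (le_trans _ h2); apply: ler_wpM2l => //.
Unshelve. all: by end_near.
Qed.

Lemma PB_L (g : 'M[R]_(m,n) -> R) : PB g -> PB (fun x => g (L x)).
Proof.
move=> [C [N H]]; have [K [K0 HK]] := Lbound.
exists (`|C| * (1 + K ^+ N)), N => x.
apply: (le_trans (H _)).
apply: (@le_trans _ _ (`|C| * (1 + `|L x| ^+ N))).
  apply: ler_wpM2r; first by rewrite addr_ge0 // exprn_ge0.
  exact: ler_norm.
rewrite -mulrA; apply: ler_wpM2l => //.
have : `|L x| ^+ N <= (K * `|x|) ^+ N.
  by apply: lerXn2r; rewrite ?nnegrE // mulr_ge0.
rewrite exprMn => h.
have h1 : 0 <= K ^+ N by rewrite exprn_ge0.
have h2 : 0 <= `|x| ^+ N by rewrite exprn_ge0.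
nra.
Qed.

Lemma CPg (s : seq ('I_m * 'I_n)) (x v : 'M[R]_(m,n)) :
  derivable (iter_partial s f) x v /\
  derive (iter_partial s f) x v =
    \sum_(q : 'I_m * 'I_n) v q.1 q.2 * iter_partial (q :: s) f x.
Proof.
apply: CP.
  by move=> p y; exact: (Hf s).2.1.
by move=> p; exact: (Hf (p :: s)).1.
Qed.

Definition LCof (t : seq (R * seq ('I_m * 'I_n))) (x : 'M[R]_(m',n')) : R :=
  \sum_(a <- t) a.1 * iter_partial a.2 f (L x).

Lemma LC_step (t : seq (R * seq ('I_m * 'I_n))) (p : 'I_m' * 'I_n') :
  exists t', (forall x, derivable (LCof t) x (delta_mx p.1 p.2)) /\
    (fun x => derive (LCof t) x (delta_mx p.1 p.2)) = LCof t'.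
Proof.
elim: t => [|a t [t' [IHd IHe]]].
  exists [::].
  have E : LCof [::] = cst 0 by apply/funext => x; rewrite /LCof /=; exact: big_nil.
  rewrite E; split; first by move=> x; exact: derivable_cst.
  by apply/funext => x; rewrite derive_cst.
set e := delta_mx p.1 p.2 : 'M[R]_(m',n').
set g := iter_partial a.2 f.
have dg : forall x, derivable (fun x => g (L x)) x e /\
   derive (fun x => g (L x)) x e = derive g (L x) (L e).
  move=> x; have [E1 E2] : derivable (fun x => g (L x)) x e = derivable g (L x) (L e) /\
      derive (fun x => g (L x)) x e = derive g (L x) (L e).
    by apply: dir_ext => tau; rewrite HL.
  by split => //; rewrite E1; exact: (CPg a.2 (L x) (L e)).1.
have E : LCof (a :: t) = a.1 \*: (fun x => g (L x)) + LCof t.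
  by apply/funext => x; rewrite /LCof big_cons.
have dterm : forall x, derivable (a.1 \*: (fun x => g (L x))) x e.
  by move=> x; apply: derivableZ; exact: (dg x).1.
exists ([seq (a.1 * (L e) q.1 q.2, q :: a.2) | q <- index_enum ('I_m * 'I_n)%type] ++ t').
rewrite E; split.
  by move=> x; apply: derivableD => //; exact: IHd.
apply/funext => x.
rewrite (deriveD (dterm x) (IHd x)).
rewrite (deriveZ _ ((dg x).1)).
rewrite (dg x).2 (CPg a.2 (L x) (L e)).2.
rewrite /LCof big_cat /= big_map.
have -> : derive (LCof t) x e = LCof t' x by rewrite -IHe.
rewrite /LCof; congr (_ + _).
rewrite [LHS]/GRing.scale /= mulr_sumr; apply: eq_bigr => q _.
by rewrite mulrA.
Qed.

Lemma LC_cons a t : LCof (a :: t) =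
  (fun x => a.1 * iter_partial a.2 f (L x)) + LCof t.
Proof. by apply/funext => x; rewrite /LCof big_cons. Qed.

Lemma LC_nil : LCof [::] = cst 0.
Proof. by apply/funext => x; rewrite /LCof /=; exact: big_nil. Qed.

Lemma LC_cont t : continuous (LCof t).
Proof.
elim: t => [|a t IH]; first by rewrite LC_nil; exact: cst_continuous.
rewrite LC_cons => x; apply: continuousD; last exact: IH.
apply: (@continuousM _ _ (cst a.1) (iter_partial a.2 f \o L)).
  exact: cst_continuous.
apply: continuous_comp; first exact: Lcont.
exact: (Hf a.2).1.
Qed.

Lemma LC_PB t : PB (LCof t).
Proof.
elim: t => [|a t IH]; first by rewrite LC_nil; exact: PB_0.
rewrite LC_cons; apply: PB_add => //; apply: PB_scale; apply: PB_L.
exact: (Hf a.2).2.2.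
Qed.

Lemma LC_iter l : exists t, iter_partial l (fun x => f (L x)) = LCof t.
Proof.
elim: l => [|p l [t IH]].
  exists [:: (1, [::])]; apply/funext => x.
  by rewrite /LCof big_cons big_nil /= mul1r addr0.
have [t' [_ E]] := LC_step t p.
by exists t'; rewrite /= IH.
Qed.

Lemma Cinf_comp : Cinf_p (fun x => f (L x)).
Proof.
move=> l; have [t ->] := LC_iter l.
split; first exact: LC_cont.
split; last exact: LC_PB.
by move=> p x; have [t' [d _]] := LC_step t p; exact: d.
Qed.

End Comp.

End PartA.

Section PartB.
Variable R : realType.

Lemma sum_double (F : nat -> R) (m : nat) :
  \sum_(l < (2 * m)%N) F l = \sum_(t < m) (F (2 * t)%N + F (2 * t + 1)%N).
Proof.
elim: m => [|m IH]; first by rewrite muln0 !big_ord0.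
have -> : (2 * m.+1 = (2 * m).+2)%N by lia.
rewrite !big_ord_recr /= IH -addrA; congr (_ + (_ + F _)); lia.
Qed.

Lemma sum_double2 (F : nat -> R) (n : nat) :
  \sum_(l < 2 ^ n.+1) F l = \sum_(t < 2 ^ n) (F (2 * t)%N + F (2 * t + 1)%N).
Proof. by rewrite expnS; exact: sum_double. Qed.

Lemma pow2_gt0 (n : nat) : (0 < 2 ^ n)%N.
Proof. by rewrite expn_gt0. Qed.

Lemma pow2R_neq0 (n : nat) : (2 ^ n)%:R != 0 :> R.
Proof. by rewrite pnatr_eq0 -lt0n pow2_gt0. Qed.

Lemma half_eq (t n : nat) : (2 * t)%:R / (2 ^ n.+1)%:R = t%:R / (2 ^ n)%:R :> R.
Proof.
have h := pow2R_neq0 n.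
by rewrite expnS !natrM; field.
Qed.

Lemma RS_refine (d : nat) (g : R -> 'rV[R]_d) (gamma : R -> 'rV[R]_d) (n : nat) :
  (forall l, (l < 2 ^ n)%N -> g ((2 * l + 1)%:R / (2 ^ n.+1)%:R) = g (l%:R / (2 ^ n)%:R)) ->
  RS_sum g gamma n.+1 = RS_sum g gamma n.
Proof.
move=> Hg; rewrite /RS_sum.
rewrite (sum_double2 (fun l => \sum_(j < d) g (l%:R / (2 ^ n.+1)%:R) 0 j *
  (gamma (l.+1%:R / (2 ^ n.+1)%:R) 0 j - gamma (l%:R / (2 ^ n.+1)%:R) 0 j))).
apply: eq_bigr => t _.
rewrite -big_split /=; apply: eq_bigr => j _.
rewrite Hg //.
have -> : ((2 * t + 1).+1 = 2 * t.+1)%N by lia.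
rewrite !half_eq.
have -> : ((2 * t).+1 = 2 * t + 1)%N by lia.
ring.
Qed.

Lemma frac_le (a b k : nat) :
  (a%:R / (2 ^ k)%:R <= b%:R / (2 ^ k)%:R :> R) = (a <= b)%N.
Proof.
rewrite ler_pM2r ?ler_nat //; rewrite invr_gt0 ltr0n; exact: pow2_gt0.
Qed.

Lemma frac_lt (a b k : nat) :
  (a%:R / (2 ^ k)%:R < b%:R / (2 ^ k)%:R :> R) = (a < b)%N.
Proof.
rewrite ltr_pM2r ?ltr_nat //; rewrite invr_gt0 ltr0n; exact: pow2_gt0.
Qed.

Lemma frac_scale (a k e : nat) :
  a%:R / (2 ^ k)%:R = (a * 2 ^ e)%:R / (2 ^ (k + e))%:R :> R.
Proof.
have h1 := pow2R_neq0 k; have h2 := pow2R_neq0 e.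
by rewrite expnD !natrM; field; rewrite h1 h2.
Qed.

Lemma cmp_eq (p l m N : nat) : (m < N)%N ->
  ((p%:R / (2 ^ m.+1)%:R <= l%:R / (2 ^ N)%:R :> R) =
     (p%:R / (2 ^ m.+1)%:R <= (2 * l + 1)%:R / (2 ^ N.+1)%:R :> R)) /\
  ((l%:R / (2 ^ N)%:R < p%:R / (2 ^ m.+1)%:R :> R) =
     ((2 * l + 1)%:R / (2 ^ N.+1)%:R < p%:R / (2 ^ m.+1)%:R :> R)).
Proof.
move=> mN.
have [e eN] : exists e, N = (m.+1 + e)%N by exists (N - m.+1)%N; lia.
rewrite {1 3}(frac_scale p m.+1 e) (frac_scale p m.+1 e.+1).
have -> : (m.+1 + e.+1 = N.+1)%N by lia.
rewrite -eN !frac_le !frac_lt.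
rewrite expnS.
set X := (p * 2 ^ e)%N.
have -> : (p * (2 * 2 ^ e) = 2 * X)%N by rewrite /X; lia.
split; apply/idP/idP => h; lia.
Qed.


Lemma Hdecomp (r : nat) : (1 < r)%N ->
  let m := trunc_log 2 r.-1 in
  (2 ^ m < r)%N /\ (r <= 2 ^ m.+1)%N.
Proof.
move=> r1 m.
have := @trunc_log_bounds 2 r.-1 isT; rewrite -/m.
have -> : (0 < r.-1)%N by lia.
move=> /(_ isT) /andP[h1 h2]; split; lia.
Qed.

Lemma H_step (r N l : nat) : (0 < r)%N -> (r <= 2 ^ N)%N ->
  H r ((2 * l + 1)%:R / (2 ^ N.+1)%:R) = H r (l%:R / (2 ^ N)%:R) :> R.
Proof.
rewrite /H; case: eqP => // /eqP r1 r0 rN.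
have r1' : (1 < r)%N by lia.
have [h1 h2] := Hdecomp r1'.
set m := trunc_log 2 r.-1 in h1 h2 *.
have mN : (m < N)%N by rewrite -(@ltn_exp2l 2) //; lia.
rewrite /haar /=.
set k := (r - 2 ^ m)%N.
rewrite ?(proj1 (cmp_eq (2 * k - 2) l mN)) ?(proj2 (cmp_eq (2 * k - 2) l mN)).
rewrite ?(proj1 (cmp_eq (2 * k - 1) l mN)) ?(proj2 (cmp_eq (2 * k - 1) l mN)).
by rewrite ?(proj1 (cmp_eq (2 * k) l mN)) ?(proj2 (cmp_eq (2 * k) l mN)).
Qed.

Lemma gfun_step (d i N l : nat) : ((i.-1 %/ d).+1 <= 2 ^ N)%N ->
  gfun d i ((2 * l + 1)%:R / (2 ^ N.+1)%:R) = gfun d i (l%:R / (2 ^ N)%:R) :> 'rV[R]_d.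
Proof.
move=> h; apply/rowP => j; rewrite !mxE.
by case: eqP => // _; rewrite H_step.
Qed.

Lemma pairS_eq (d i N : nat) (gamma : R -> 'rV[R]_d) :
  ((i.-1 %/ d).+1 <= 2 ^ N)%N -> pairS d i gamma = RS_sum (gfun d i) gamma N.
Proof.
move=> h.
have E : forall p, RS_sum (gfun d i) gamma (N + p) = RS_sum (gfun d i) gamma N.
  elim=> [|p IH]; first by rewrite addn0.
  rewrite addnS RS_refine // => l _; apply: gfun_step; apply: (leq_trans h).
  by rewrite leq_pexp2l //; lia.
have H1 : RS_sum (gfun d i) gamma @ \oo --> RS_sum (gfun d i) gamma N.
  apply: cvg_trans (near_eq_cvg _) (cvg_cst _).
  near=> k.
  have Nk : (N <= k)%N by near: k; exact: nbhs_infty_ge.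
  by rewrite /= -(subnKC Nk) E.
rewrite /pairS; exact: cvg_lim H1.
Unshelve. all: by end_near.
Qed.

Lemma sum_split2 (F : nat -> R) (N : nat) :
  \sum_(r < 2 ^ N.+1) F r = \sum_(r < 2 ^ N) F r + \sum_(r < 2 ^ N) F (2 ^ N + r)%N.
Proof. by rewrite expnS mul2n -addnn big_split_ord. Qed.

Lemma Hnew (N l' : nat) (u : R) : (l' < 2 ^ N)%N ->
  H (2 ^ N + l').+1 u = haar N l'.+1 u.
Proof.
move=> hl; rewrite /H.
have P0 := pow2_gt0 N.
have -> : ((2 ^ N + l').+1 == 1)%N = false by apply/negbTE; lia.
have -> : trunc_log 2 (2 ^ N + l').+1.-1 = N.
  apply: trunc_log_eq => //; rewrite expnS; apply/andP; split; lia.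
by have -> : ((2 ^ N + l').+1 - 2 ^ N = l'.+1)%N by lia.
Qed.

Lemma haar_span (N : nat) : exists c : nat -> nat -> R, forall l, (l <= 2 ^ N)%N ->
  forall u : R, 0 <= u -> u < 1 ->
  \sum_(r < 2 ^ N) c l r * H r.+1 u = (if u < l%:R / (2 ^ N)%:R then 1 else 0).
Proof.
elim: N => [|N [c Hc]].
  exists (fun l r => if l == 1%N then 1 else 0) => l hl u u0 u1.
  rewrite expn0 big_ord1 /H /= mulr1 divr1.
  case: l hl => [|[|//]] _ /=; first by rewrite ltNge u0.
  by rewrite u1.
pose P := (2 ^ N)%N.
have P0 : (0 < P)%N by exact: pow2_gt0.
pose c' := fun l r => if odd l then
    (if (r < P)%N then (c l./2 r + c l./2.+1 r) / 2
     else if r == (P + l./2)%N then (2 * Num.sqrt (P%:R : R))^-1 else 0)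
  else (if (r < P)%N then c l./2 r else 0).
exists c' => l hl u u0 u1.
rewrite (sum_split2 (fun r => c' l r * H r.+1 u)).
have E2 : forall r : 'I_(2 ^ N), ((2 ^ N + r < P)%N = false).
  by move=> r; apply/negbTE; rewrite /P; lia.
have E1 : forall r : 'I_(2 ^ N), ((r < P)%N = true) by move=> r; rewrite /P ltn_ord.
have lE := odd_double_half l.
rewrite /c'; case lodd: (odd l); last first.
  rewrite [X in _ + X = _]big1 ?addr0; last by move=> r _; rewrite E2 mul0r.
  rewrite (eq_bigr (fun r : 'I_(2 ^ N) => c l./2 r * H r.+1 u)); last first.
    by move=> r _; rewrite E1.
  rewrite Hc //; last by rewrite /P in hl *; rewrite expnS in hl; lia.
  rewrite -(half_eq l./2 N); congr (if _ < _%:R / _ then _ else _).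
  move: lE; rewrite lodd /=; lia.
set l' := l./2.
have hl' : (l' < 2 ^ N)%N by move: lE hl; rewrite lodd expnS /l'; lia.
rewrite (eq_bigr (fun r : 'I_(2 ^ N) => (c l' r * H r.+1 u) / 2 +
    (c l'.+1 r * H r.+1 u) / 2)); last first.
  by move=> r _; rewrite E1; ring.
rewrite big_split /= -!mulr_suml Hc //; last lia.
rewrite Hc //.
rewrite [X in _ + X = _](bigD1 (Ordinal hl')) //=.
rewrite [X in _ + (_ + X) = _]big1; last first.
  move=> r /negPf rl; rewrite E2.
  have -> : ((2 ^ N + r)%N == (P + l')%N) = false.
    by apply/negbTE; rewrite /P; apply: contraFN rl => /eqP h; apply/eqP/val_inj => /=; lia.
  by rewrite mul0r.
have -> : (2 ^ N + l' < P)%N = false by apply/negbTE; rewrite /P; lia.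
rewrite /= eqxx addr0 Hnew // /haar /=.
have -> : (2 * l'.+1 - 2 = 2 * l')%N by lia.
have -> : (2 * l'.+1 - 1 = 2 * l' + 1)%N by lia.
have lE' : l = (2 * l' + 1)%N by move: lE; rewrite lodd /= /l'; lia.
rewrite lE' -(half_eq l' N) -(half_eq l'.+1 N).
have AB : (2 * l')%:R / (2 ^ N.+1)%:R < (2 * l' + 1)%:R / (2 ^ N.+1)%:R :> R.
  by rewrite frac_lt; lia.
have BC : (2 * l' + 1)%:R / (2 ^ N.+1)%:R < (2 * l'.+1)%:R / (2 ^ N.+1)%:R :> R.
  by rewrite frac_lt; lia.
set A := (2 * l')%:R / (2 ^ N.+1)%:R in AB *.
set B := (2 * l' + 1)%:R / (2 ^ N.+1)%:R in AB BC *.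
set C := (2 * l'.+1)%:R / (2 ^ N.+1)%:R in BC *.
have s0 : 0 < Num.sqrt (P%:R : R) by rewrite sqrtr_gt0 ltr0n.
set s := Num.sqrt (P%:R : R) in s0 *.
have qs : (2 * s)^-1 * s = 1 / 2 by field; rewrite gt_eqF.
have qsN : (2 * s)^-1 * - s = - (1 / 2) by rewrite mulrN qs.
have nle : forall x y : R, x < y -> (y <= x) = false.
  by move=> x y h; apply/negbTE; rewrite -ltNge.
have nlt : forall x y : R, y <= x -> (x < y) = false.
  by move=> x y h; apply/negbTE; rewrite -leNgt.
case: (ltrP u A) => uA.
  have uB : u < B by lra.
  have uC : u < C by lra.
  rewrite ?uB ?uC ?uA ?(nle _ _ uA) ?(nle _ _ uB) /= ?andbF ?mulr0; lra.
case: (ltrP u B) => uB.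
  have uC : u < C by lra.
  rewrite ?uB ?uC ?uA ?(nlt _ _ uA) /= ?qs; lra.
case: (ltrP u C) => uC.
  rewrite ?uC ?uB ?(nlt _ _ uA) ?(nlt _ _ uB) /= ?andbF /= ?qsN; lra.
rewrite ?(nlt _ _ uA) ?(nlt _ _ uB) ?(nlt _ _ uC) /= ?andbF /= ?mulr0; lra.
Qed.

Lemma sum_single (d : nat) (j : 'I_d) (F : 'I_d -> R) :
  \sum_(i < d) (if i == j then F i else 0) = F j.
Proof.
rewrite (bigD1 j) //= eqxx big1 ?addr0 // => i /negPf ->; by [].
Qed.

Lemma sum_mod (d P j : nat) (F : nat -> R) : (j < d)%N ->
  \sum_(q < d * P) (if ((q %% d)%N == j)%N then F (q %/ d)%N else 0) = \sum_(r < P) F r.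
Proof.
move=> jd; elim: P => [|P IH]; first by rewrite muln0 !big_ord0.
rewrite big_ord_recr /= -IH.
have -> : (d * P.+1 = d * P + d)%N by rewrite mulnS addnC.
rewrite big_split_ord /=; congr (_ + _).
have d0 : (0 < d)%N by lia.
rewrite (eq_bigr (fun i : 'I_d => if i == Ordinal jd then F P else 0)).
  by rewrite (sum_single (Ordinal jd) (fun=> F P)).
move=> i _.
have -> : ((d * P + i) %% d = i)%N by rewrite mulnC modnMDl modn_small.
have -> : ((d * P + i) %/ d = P)%N by rewrite mulnC divnMDl // divn_small // addn0.
by [].
Qed.

Lemma tele_if (f : nat -> R) (M l : nat) : (l <= M)%N ->
  \sum_(t < M) (if (t < l)%N then f t.+1 - f t else 0) = f l - f 0%N.
Proof.
elim: M l => [|M IH] l lM.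
  have -> : l = 0%N by lia.
  by rewrite big_ord0 subrr.
rewrite big_ord_recr /=.
have [lM'|lM'] := leqP l M.
  by rewrite IH // addr0.
have -> : l = M.+1 by lia.
rewrite (eq_bigr (fun t : 'I_M => if (t < M)%N then f t.+1 - f t else 0)).
  by rewrite IH // addrC addrA subrK addrC.
by move=> t _; rewrite ltn_ord ltnS ltnW.
Qed.

Lemma YtoYt_val (d N l : nat) (c : nat -> R) (gamma : R -> 'rV[R]_d) (j : 'I_d) :
  gamma 0 = 0 -> (l <= 2 ^ N)%N ->
  (forall u : R, 0 <= u -> u < 1 ->
     \sum_(r < 2 ^ N) c r * H r.+1 u = (if u < l%:R / (2 ^ N)%:R then 1 else 0)) ->
  \sum_(q < d * 2 ^ N) (if ((q %% d)%N == j)%N then c (q %/ d)%N else 0) *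
     pairS d q.+1 gamma = gamma (l%:R / (2 ^ N)%:R) 0 j.
Proof.
move=> g0 lN hc.
have d0 : (0 < d)%N by apply: leq_ltn_trans (ltn_ord j).
pose f t := gamma (t%:R / (2 ^ N)%:R) 0 j.
pose D t := f t.+1 - f t.
pose G r := c r * \sum_(t < 2 ^ N) H r.+1 (t%:R / (2 ^ N)%:R) * D t.
rewrite (eq_bigr (fun q : 'I_(d * 2 ^ N) =>
    if ((q %% d)%N == j)%N then G (q %/ d)%N else 0)); last first.
  move=> q _; case: eqP => qj; last by rewrite mul0r.
  rewrite /G; congr (_ * _).
  rewrite (@pairS_eq d q.+1 N); last by rewrite /= ltn_divLR //; have := ltn_ord q; lia.
  rewrite /RS_sum; apply: eq_bigr => t _.
  rewrite (eq_bigr (fun j' : 'I_d =>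
      if j' == j then H (q %/ d).+1 (t%:R / (2 ^ N)%:R) * D t else 0)).
    by rewrite (sum_single j (fun _ => H (q %/ d).+1 (t%:R / (2 ^ N)%:R) * D t)).
  move=> j' _; rewrite mxE /=; case: (eqVneq j' j) => [->|ne].
    by rewrite qj eqxx.
  have -> : ((j' : nat) == (q %% d)%N) = false.
    by rewrite qj; apply/negbTE; apply: contra ne => /eqP h; apply/eqP/val_inj.
  by rewrite mul0r.
rewrite (@sum_mod d (2 ^ N) j G (ltn_ord j)) /G.
rewrite (eq_bigr (fun r : 'I_(2 ^ N) => \sum_(t < 2 ^ N) c r * H r.+1 (t%:R / (2 ^ N)%:R) * D t));
  last by move=> r _; rewrite mulr_sumr; apply: eq_bigr => t _; rewrite mulrA.
rewrite exchange_big /=.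
rewrite (eq_bigr (fun t : 'I_(2 ^ N) => if (t < l)%N then D t else 0)).
  rewrite tele_if // /f /= mul0r g0; first by rewrite mxE subr0.
move=> t _; rewrite -mulr_suml hc.
- by rewrite frac_lt; case: ifP; rewrite ?mul1r ?mul0r.
- by apply: divr_ge0; rewrite ler0n.
- rewrite ltr_pdivrMr ?mul1r ?ltr_nat ?ltr0n //; exact: pow2_gt0.
Qed.

Lemma prev_gamma (d N : nat) (gamma : R -> 'rV[R]_d) (t : 'I_(2 ^ N)) (j : 'I_d) :
  gamma 0 = 0 ->
  \sum_(t' < 2 ^ N) (t'.+1 == t)%:R * gamma (t'.+1%:R / (2 ^ N)%:R) 0 j =
  gamma (t%:R / (2 ^ N)%:R) 0 j.
Proof.
move=> g0; case: t => [[|s] hs] /=.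
  rewrite big1; first by rewrite mul0r g0 mxE.
  by move=> t' _; rewrite mul0r.
have hs' : (s < 2 ^ N)%N by lia.
rewrite (bigD1 (Ordinal hs')) //= eqxx mul1r big1 ?addr0 //.
move=> t' ht'; have -> : (t'.+1 == s.+1) = false.
  by apply/negbTE; apply: contra ht' => /eqP [h]; apply/eqP/val_inj.
by rewrite mul0r.
Qed.

End PartB.

End Helpers.
Import Helpers.
Import Order.TTheory GRing.Theory Num.Theory.
Import numFieldNormedType.Exports.
Local Open Scope ring_scope.

Theorem lemma1p1 (R : realType) (d : nat) (hd : (0 < d)%N)
    (F : (R -> 'rV[R]_d) -> R) :
  inY F <-> inYt F.
Proof.

split.
  move=> [k [n [l [f [k0 [n0 [hl [hinc [hlast [hf hF]]]]]]]]]].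
  have [c Hc] := haar_span R n.
  pose L := fun y : 'rV[R]_(d * 2 ^ n) => \matrix_(i < k, j < d)
    \sum_(q < d * 2 ^ n) (if ((q %% d)%N == j)%N then c (l i) (q %/ d)%N else 0) * y 0 q.
  exists (d * 2 ^ n)%N, (fun y => f (L y)); split.
  - by rewrite muln_gt0 hd pow2_gt0.
  - apply: Cinf_comp hf => a x y; apply/matrixP => i j; rewrite !mxE.
    rewrite mulr_sumr -big_split; apply: eq_bigr => q _; rewrite !mxE /=; ring.
  - move=> gamma hg; rewrite hF //; congr f; apply/matrixP => i j; rewrite !mxE.
    rewrite (eq_bigr (fun q : 'I_(d * 2 ^ n) =>
      (if ((q %% d)%N == j)%N then c (l i) (q %/ d)%N else 0) * pairS d q.+1 gamma)).
      symmetry; apply: (@YtoYt_val R d n (l i) (c (l i)) gamma j); first exact: hg.2.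
        exact: (hl i (ltn_ord i)).2.
      by move=> u u0 u1; apply: Hc => //; exact: (hl i (ltn_ord i)).2.
    by move=> q _; rewrite mxE.
move=> [k [f [k0 hf hF]]].
pose prevM (M : 'M[R]_(2 ^ k, d)) (t : 'I_(2 ^ k)) (j : 'I_d) :=
  \sum_(t' < 2 ^ k) (t'.+1 == t)%:R * M t' j.
pose L := fun M : 'M[R]_(2 ^ k, d) => \row_(i < k) \sum_(t < 2 ^ k) \sum_(j < d)
  gfun d i.+1 (t%:R / (2 ^ k)%:R) 0 j * (M t j - prevM M t j).
have pl : forall M1 M2 a t j, prevM (a *: M1 + M2) t j = a * prevM M1 t j + prevM M2 t j.
  move=> M1 M2 a t j; rewrite /prevM mulr_sumr -big_split; apply: eq_bigr => t' _.
  rewrite !mxE /=; ring.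
exists (2 ^ k)%N, k, (fun i => i.+1), (fun M => f (L M)).
split; first exact: pow2_gt0.
split; first by [].
split; first by move=> i hi; split => //.
split; first by [].
split; first by rewrite prednK // pow2_gt0.
split.
  apply: Cinf_comp hf => a x y; apply/rowP => i; rewrite !mxE.
  rewrite mulr_sumr -big_split; apply: eq_bigr => t _.
  rewrite mulr_sumr -big_split; apply: eq_bigr => j _.
  rewrite pl !mxE /=; ring.
move=> gamma hg; rewrite hF //; congr f; apply/rowP => i; rewrite !mxE.
rewrite (@pairS_eq R d i.+1 k); last first.
  rewrite /=; apply: (@leq_ltn_trans i); first exact: leq_div.
  apply: (@ltn_trans k); first exact: ltn_ord.
  exact: ltn_expl.
rewrite /RS_sum; apply: eq_bigr => t _; apply: eq_bigr => j _; rewrite !mxE.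
congr (_ * (_ - _)).
rewrite /prevM (eq_bigr (fun t' : 'I_(2 ^ k) =>
   (t'.+1 == t)%:R * gamma (t'.+1%:R / (2 ^ k)%:R) 0 j)).
  by rewrite prev_gamma //; exact: hg.2.
by move=> t' _; rewrite mxE.
Qed.
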